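(* Let $Q=\operatorname{diag}(\lambda_1,\lambda_2,\lambda_3)$ with $-\tfrac13<\lambda_1\le\lambda_2\le\lambda_3<\tfrac23$ and $\lambda_1+\lambda_2+\lambda_3=0$, and let $\mu_1,\mu_2,\mu_3$ be the Lagrange multipliers of its optimal density $\rho_Q$. Then $\mu_1\le\mu_2\le\mu_3$, and $\mu_i=\mu_j$ whenever $\lambda_i=\lambda_j$ ($1\le i\ne j\le 3$).
   Context: Points of the unit sphere $\mathbb S^2$ are written $(x,y,z)$, and $\mathrm dS$ is surface measure. For a physical $Q$ (symmetric traceless with all eigenvalues in $(-\tfrac13,\tfrac23)$) the Ball–Majumdar potential is $f(Q)=\inf\int_{\mathbb S^2}\rho\ln\rho\,\mathrm dS$ over even probability densities $\rho$ with $\int(\mathbf n\otimes\mathbf n-\tfrac13I_3)\rho\,\mathrm dS=Q$. For diagonal physical $Q=\operatorname{diag}(\lambda_1,\lambda_2,\lambda_3)$ this infimum is attained by the density $\rho_Q(x,y,z)=\exp(\mu_1x^2+\mu_2y^2+\mu_3z^2)/Z$, $Z=\int_{\mathbb S^2}\exp(\mu_1x^2+\mu_2y^2+\mu_3z^2)\,\mathrm dS$, where the real numbers $\mu_1,\mu_2,\mu_3$ (the Lagrange multipliers) satisfy $\mu_1+\mu_2+\mu_3=0$ and $\frac1Z\frac{\partial Z}{\partial\mu_i}=\lambda_i+\tfrac13$, i.e. $\int x^2\rho_Q\,\mathrm dS=\lambda_1+\tfrac13$, $\int y^2\rho_Q\,\mathrm dS=\lambda_2+\tfrac13$, $\int z^2\rho_Q\,\mathrm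 dS=\lambda_3+\tfrac13$. *)

(* Defs.v *)
From Stdlib Require Import Reals.
From Coquelicot Require Import Coquelicot.
Open Scope R_scope.

(* Surface integral over the unit sphere S^2 (surface measure dS), written in
   spherical coordinates: (x,y,z) = (sin t cos p, sin t sin p, cos t),
   dS = sin t dt dp, t in [0,pi], p in [0,2 pi]. *)
Definition sphere_int (f : R -> R -> R -> R) : R :=
  RInt (fun p =>
    RInt (fun t => f (sin t * cos p) (sin t * sin p) (cos t) * sin t) 0 PI)
    0 (2 * PI).

Definition BM_Z (m1 m2 m3 : R) : R :=
  sphere_int (fun x y z => exp (m1 * x ^ 2 + m2 * y ^ 2 + m3 * z ^ 2)).

Definition BM_rho (m1 m2 m3 : R) (x y z : R) : R :=
  exp (m1 * x ^ 2 + m2 * y ^ 2 + m3 * z ^ 2) / BM_Z m1 m2 m3.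

(* (m1,m2,m3) are the Lagrange multipliers of the optimal density for
   Q = diag(l1,l2,l3): they sum to zero and the second moments of rho_Q
   reproduce Q + I/3. *)
Definition BM_multipliers (l1 l2 l3 m1 m2 m3 : R) : Prop :=
  m1 + m2 + m3 = 0 /\
  sphere_int (fun x y z => x ^ 2 * BM_rho m1 m2 m3 x y z) = l1 + 1/3 /\
  sphere_int (fun x y z => y ^ 2 * BM_rho m1 m2 m3 x y z) = l2 + 1/3 /\
  sphere_int (fun x y z => z ^ 2 * BM_rho m1 m2 m3 x y z) = l3 + 1/3.

(* Main.v *)
Require Import Defs.
From Stdlib Require Import Reals Lra.
From Coquelicot Require Import Coquelicot.
Open Scope R_scope.

Lemma ball_R (x e y : R) : ball x e y <-> Rabs (y - x) < e.
Proof. unfold ball; simpl; unfold AbsRing_ball, abs, minus, plus, opp; simpl. tauto. Qed.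

Lemma cont_ed (f : R -> R) x :
  (forall eps, 0 < eps -> exists d, 0 < d /\ forall y, Rabs (y - x) < d -> Rabs (f y - f x) < eps) ->
  continuous f x.
Proof.
  intros H. apply (filterlim_locally f (f x)). intros eps.
  destruct (H eps (cond_pos eps)) as [d [Hd Hy]].
  exists (mkposreal d Hd). intros y Hb. apply ball_R. apply Hy. apply ball_R in Hb. exact Hb.
Qed.

Lemma c2_swap f x y : continuity_2d_pt f x y -> continuity_2d_pt (fun u v => f v u) y x.
Proof.
  intros H eps. destruct (H eps) as [d Hd]. exists d. intros u v Hu Hv. apply Hd; auto.
Qed.

Lemma c2_1 f x y : continuity_2d_pt f x y -> continuous (fun u => f u y) x.
Proof.
  intros H. apply cont_ed. intros eps He. destruct (H (mkposreal eps He)) as [d Hd].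
  exists d. split. apply cond_pos. intros u Hu. apply (Hd u y Hu).
  unfold Rminus; rewrite Rplus_opp_r, Rabs_R0. apply cond_pos.
Qed.

Lemma c2_comp (g : R -> R) f x y : continuous g (f x y) -> continuity_2d_pt f x y ->
  continuity_2d_pt (fun u v => g (f u v)) x y.
Proof.
  intros Hg Hf. apply continuity_2d_pt_filterlim. apply continuity_2d_pt_filterlim in Hf.
  eapply filterlim_comp. exact Hf. exact Hg.
Qed.

Lemma c2_pow f n x y : continuity_2d_pt f x y -> continuity_2d_pt (fun u v => (f u v) ^ n) x y.
Proof.
  intros H. induction n as [|n IH]; simpl.
  apply continuity_2d_pt_const. apply continuity_2d_pt_mult; auto.
Qed.

Lemma c2_div f c x y : continuity_2d_pt f x y -> continuity_2d_pt (fun u v => f u v / c) x y.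
Proof.
  intros H. unfold Rdiv. apply continuity_2d_pt_mult; auto. apply continuity_2d_pt_const.
Qed.

Ltac c2 := repeat first
  [ apply continuity_2d_pt_plus | apply continuity_2d_pt_minus | apply continuity_2d_pt_mult
  | apply continuity_2d_pt_opp | apply c2_div | apply c2_pow
  | apply continuity_2d_pt_id1 | apply continuity_2d_pt_id2 | apply continuity_2d_pt_const
  | apply (c2_comp sin); [apply continuous_sin|]
  | apply (c2_comp cos); [apply continuous_cos|]
  | apply (c2_comp exp); [apply continuous_exp|] ].

Definition cont2d (F : R -> R -> R) := forall t p, continuity_2d_pt F t p.

Lemma test m1 m2 m3 Z : cont2d (fun t p => (sin t * cos p)^2 * (exp (m1 * (sin t * cos p)^2 + m2 * (sin t * sin p) ^2 + m3 * cos t ^2) / Z) * sin t).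
Proof. intros t p. c2. Qed.

Lemma param_cont F a b p : cont2d F -> a <= b ->
  continuous (fun p => RInt (fun t => F t p) a b) p.
Proof.
  intros HF Hab. apply cont_ed. intros eps He.
  assert (He' : 0 < eps / (b - a + 1)) by (apply Rdiv_lt_0_compat; lra).
  destruct (uniform_continuity_2d_1d F a b p (fun x _ => HF x p) (mkposreal _ He')) as [d Hd].
  exists d. split. apply cond_pos. intros q Hq.
  assert (Hex : forall q, ex_RInt (fun t => F t q) a b).
  { intros q0. apply (@ex_RInt_continuous R_CompleteNormedModule). intros z _. apply c2_1. apply HF. }
  replace (RInt (fun t => F t q) a b - RInt (fun t => F t p) a b)
    with (RInt (fun t => F t q - F t p) a b).
  2:{ rewrite (RInt_minus (V:=R_CompleteNormedModule)) by auto. reflexivity. }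
  apply Rle_lt_trans with ((b - a) * (eps / (b - a + 1))).
  - apply abs_RInt_le_const; auto.
    + apply (ex_RInt_minus (V:=R_CompleteNormedModule)); auto.
    + intros t Ht. left.
      apply (Hd t p t q Ht); auto.
      * split; destruct d; simpl; lra.
      * split; apply Rabs_le_between' ; lra.
      * unfold Rminus; rewrite Rplus_opp_r, Rabs_R0. apply cond_pos.
  - apply Rlt_le_trans with ((b - a + 1) * (eps / (b - a + 1))).
    apply Rmult_lt_compat_r; lra. right. field. lra.
Qed.

Definition DI (F : R -> R -> R) := RInt (fun p => RInt (fun t => F t p) 0 PI) 0 (2*PI).

Lemma ex_in F p a b : cont2d F -> ex_RInt (fun t => F t p) a b.
Proof. intros HF. apply (@ex_RInt_continuous R_CompleteNormedModule). intros z _. apply c2_1. apply HF. Qed.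

Lemma ex_out F a b c d : cont2d F -> a <= b -> ex_RInt (fun p => RInt (fun t => F t p) a b) c d.
Proof. intros HF Hab. apply (@ex_RInt_continuous R_CompleteNormedModule). intros z _. apply param_cont; auto. Qed.

Lemma PI_ge0 : 0 <= PI. Proof. generalize PI_RGT_0; lra. Qed.

Lemma DI_plus F G : cont2d F -> cont2d G -> DI (fun t p => F t p + G t p) = DI F + DI G.
Proof.
  intros HF HG. unfold DI.
  rewrite <- (RInt_plus (V:=R_CompleteNormedModule)) by (apply ex_out; auto using PI_ge0).
  apply RInt_ext. intros p _.
  apply (RInt_plus (V:=R_CompleteNormedModule)); apply ex_in; auto.
Qed.

Lemma DI_scal k F : cont2d F -> DI (fun t p => k * F t p) = k * DI F.
Proof.
  intros HF. unfold DI.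
  rewrite <- (RInt_scal (V:=R_CompleteNormedModule)) by (apply ex_out; auto using PI_ge0).
  apply RInt_ext. intros p _.
  apply (RInt_scal (V:=R_CompleteNormedModule)); apply ex_in; auto.
Qed.

Lemma DI_ext F G : (forall t p, F t p = G t p) -> DI F = DI G.
Proof. intros H. unfold DI. apply RInt_ext. intros p _. apply RInt_ext. intros t _. apply H. Qed.

Lemma key A At B Bp : cont2d At -> cont2d B -> cont2d Bp ->
 (forall t p, is_derive (fun t => A t p) t (At t p)) ->
 (forall t p, is_derive (fun p => B t p) p (Bp t p)) ->
 (forall p, A 0 p = 0) -> (forall p, A PI p = 0) -> (forall t, B t (2*PI) = B t 0) ->
 DI (fun t p => At t p + Bp t p) = 0.
Proof.
  intros HAt HB HBp DA DB A0 API Bper.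
  rewrite DI_plus by auto.
  assert (H1 : DI At = 0).
  { unfold DI. rewrite (RInt_ext _ (fun _ => 0)).
    - rewrite RInt_const. unfold scal; simpl; unfold mult; simpl. ring.
    - intros p _.
      assert (E : minus (A PI p) (A 0 p) = 0) by (rewrite A0, API; unfold minus, plus, opp; simpl; ring).
      rewrite <- E at 2. apply is_RInt_unique.
      apply (is_RInt_derive (V:=R_CompleteNormedModule) (fun t => A t p) (fun t => At t p) 0 PI).
      + intros t _. apply DA.
      + intros t _. apply c2_1. apply HAt. }
  assert (H2 : DI Bp = 0).
  { unfold DI.
    set (K := fun p => RInt (fun t => B t p) 0 PI).
    assert (DK : forall p, is_derive K p (RInt (fun t => Bp t p) 0 PI)).
    { intros p. unfold K.
      assert (E : RInt (fun t => Bp t p) 0 PI = RInt (fun t => Derive (fun u => B t u) p) 0 PI).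
      { apply RInt_ext. intros t _. symmetry. apply is_derive_unique. apply DB. }
      rewrite E.
      apply (is_derive_RInt_param (fun u t => B t u)).
      - apply filter_forall. intros x t _. eexists. apply DB.
      - intros t _. apply continuity_2d_pt_ext with (fun u v => Bp v u).
        + intros u v. symmetry. apply is_derive_unique. apply DB.
        + apply c2_swap. apply HBp.
      - apply filter_forall. intros y. apply ex_in. auto. }
    assert (E : minus (K (2*PI)) (K 0) = 0).
    { unfold K. rewrite (RInt_ext (fun t => B t (2*PI)) (fun t => B t 0)).
        unfold minus, plus, opp; simpl; ring. intros t _. apply Bper. }
    transitivity (minus (K (2*PI)) (K 0)); [|exact E]. apply is_RInt_unique.
    apply (is_RInt_derive (V:=R_CompleteNormedModule) K (fun p => RInt (fun t => Bp t p) 0 PI) 0 (2*PI)).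
    + intros p _. apply DK.
    + intros p _. apply param_cont; auto using PI_ge0. }
  rewrite H1, H2. apply Rplus_0_r.
Qed.

Lemma inner_ge0 F p : cont2d F -> (forall t, 0 <= t <= PI -> 0 <= F t p) -> 0 <= RInt (fun t => F t p) 0 PI.
Proof.
  intros HF Hpos.
  apply Rle_trans with (RInt (fun _ => 0) 0 PI).
  - rewrite RInt_const. unfold scal; simpl; unfold mult; simpl. lra.
  - apply RInt_le. apply PI_ge0. apply ex_RInt_const. apply ex_in; auto.
    intros t Ht. apply Hpos. lra.
Qed.

Lemma DI_pos F : cont2d F -> (forall t p, 0 <= t <= PI -> 0 <= F t p) ->
  (forall t p, 0 < t < PI/2 -> 0 < p < PI/2 -> 0 < F t p) -> 0 < DI F.
Proof.
  intros HF Hpos Hs. generalize PI_RGT_0; intros HPI.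
  assert (Hin : forall p, 0 < p < PI/2 -> 0 < RInt (fun t => F t p) 0 PI).
  { intros p Hp.
    rewrite <- (RInt_Chasles (V:=R_CompleteNormedModule) _ 0 (PI/2) PI) by (apply ex_in; auto).
    unfold plus; simpl.
    apply Rlt_le_trans with (RInt (fun t => F t p) 0 (PI/2) + 0).
    2:{ apply Rplus_le_compat_l.
        apply Rle_trans with (RInt (fun _ => 0) (PI/2) PI).
        - rewrite RInt_const. unfold scal; simpl; unfold mult; simpl. lra.
        - apply RInt_le. lra. apply ex_RInt_const. apply ex_in; auto.
          intros t Ht. apply Hpos. lra. }
    rewrite Rplus_0_r.
    apply Rle_lt_trans with (RInt (fun _ => 0) 0 (PI/2)).
    - rewrite RInt_const. unfold scal; simpl; unfold mult; simpl. lra.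
    - apply RInt_lt. lra. intros x _. apply c2_1. apply HF. intros; apply continuous_const.
      intros t Ht. apply Hs; lra. }
  unfold DI.
  rewrite <- (RInt_Chasles (V:=R_CompleteNormedModule) _ 0 (PI/2) (2*PI)) by (apply ex_out; auto; lra).
  unfold plus; simpl.
  apply Rlt_le_trans with (RInt (fun p => RInt (fun t => F t p) 0 PI) 0 (PI/2) + 0).
  2:{ apply Rplus_le_compat_l.
      apply Rle_trans with (RInt (fun _ => 0) (PI/2) (2*PI)).
      - rewrite RInt_const. unfold scal; simpl; unfold mult; simpl. lra.
      - apply RInt_le. lra. apply ex_RInt_const. apply ex_out; auto; lra.
        intros p _. apply inner_ge0; auto. }
  rewrite Rplus_0_r.
  apply Rle_lt_trans with (RInt (fun _ => 0) 0 (PI/2)).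
  - rewrite RInt_const. unfold scal; simpl; unfold mult; simpl. lra.
  - apply RInt_lt. lra. intros x _. apply param_cont; auto; lra. intros; apply continuous_const.
    intros p Hp. apply Hin; lra.
Qed.

Definition rr (m1 m2 m3 Zc t p : R) :=
  exp (m1 * (sin t * cos p) ^ 2 + m2 * (sin t * sin p) ^ 2 + m3 * cos t ^ 2) / Zc.

Lemma e2 : forall x, x * (x * 1) = x ^ 2. intros; ring. Qed.

Ltac c2r := intros ?t ?p; unfold rr; c2.
Ltac dring := repeat rewrite e2; match goal with |- ?a = ?b => change (@eq R a b) end; unfold Rdiv; ring.
Ltac der := intros ?t ?p; unfold rr; auto_derive; [exact I|]; dring.

Lemma id_xy m1 m2 m3 Zc :
  DI (fun t p => (sin t * cos p)^2 * rr m1 m2 m3 Zc t p * sin t)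
  + (-1) * DI (fun t p => (sin t * sin p)^2 * rr m1 m2 m3 Zc t p * sin t)
  + (2 * (m2 - m1)) * DI (fun t p => (sin t * cos p)^2 * (sin t * sin p)^2 * rr m1 m2 m3 Zc t p * sin t) = 0.
Proof.
  rewrite <- !DI_scal by c2r. rewrite <- !DI_plus by c2r.
  rewrite <- (key (fun _ _ => 0) (fun _ _ => 0)
     (fun t p => sin t ^ 3 * cos p * sin p * rr m1 m2 m3 Zc t p)
     (fun t p => sin t ^ 3 * ((cos p ^ 2 - sin p ^ 2) + cos p * sin p * (2 * (m2 - m1) * sin t ^ 2 * cos p * sin p)) * rr m1 m2 m3 Zc t p)).
  - apply DI_ext. intros t p. unfold rr, Rdiv. ring.
  - c2r.
  - c2r.
  - c2r.
  - intros t p. apply (is_derive_const (K:=R_AbsRing) (V:=R_NormedModule)).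
  - der.
  - reflexivity.
  - reflexivity.
  - intros t. unfold rr. rewrite sin_2PI, cos_2PI, sin_0, cos_0. reflexivity.
Qed.

Lemma id_xz m1 m2 m3 Zc :
  DI (fun t p => cos t ^ 2 * rr m1 m2 m3 Zc t p * sin t)
  + (-1) * DI (fun t p => (sin t * cos p)^2 * rr m1 m2 m3 Zc t p * sin t)
  + (2 * (m1 - m3)) * DI (fun t p => (sin t * cos p)^2 * cos t ^ 2 * rr m1 m2 m3 Zc t p * sin t) = 0.
Proof.
  rewrite <- !DI_scal by c2r. rewrite <- !DI_plus by c2r.
  rewrite <- (key (fun t p => sin t ^ 2 * cos p ^ 2 * cos t * rr m1 m2 m3 Zc t p)
     (fun t p => (2 * sin t * cos t ^ 2 * cos p ^ 2 - sin t ^ 3 * cos p ^ 2) * rr m1 m2 m3 Zc t p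
        + sin t ^ 2 * cos p ^ 2 * cos t * rr m1 m2 m3 Zc t p *
          (2 * m1 * (sin t * cos p) * (cos t * cos p) + 2 * m2 * (sin t * sin p) * (cos t * sin p) - 2 * m3 * cos t * sin t))
     (fun t p => - sin t * cos t ^ 2 * sin p * cos p * rr m1 m2 m3 Zc t p)
     (fun t p => - sin t * cos t ^ 2 * ((cos p ^ 2 - sin p ^ 2) + sin p * cos p *
          (- 2 * m1 * sin t ^ 2 * cos p * sin p + 2 * m2 * sin t ^ 2 * sin p * cos p)) * rr m1 m2 m3 Zc t p)).
  - apply DI_ext. intros t p.
    assert (H : forall K, K = 0 -> 0 = 0).
    { auto. }
    assert (HH : (2 * sin t * cos t ^ 2 * cos p ^ 2 - sin t ^ 3 * cos p ^ 2) * rr m1 m2 m3 Zc t p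
        + sin t ^ 2 * cos p ^ 2 * cos t * rr m1 m2 m3 Zc t p *
          (2 * m1 * (sin t * cos p) * (cos t * cos p) + 2 * m2 * (sin t * sin p) * (cos t * sin p) - 2 * m3 * cos t * sin t)
        + - sin t * cos t ^ 2 * ((cos p ^ 2 - sin p ^ 2) + sin p * cos p *
          (- 2 * m1 * sin t ^ 2 * cos p * sin p + 2 * m2 * sin t ^ 2 * sin p * cos p)) * rr m1 m2 m3 Zc t p
        - (cos t ^ 2 * rr m1 m2 m3 Zc t p * sin t + ((-1) * ((sin t * cos p)^2 * rr m1 m2 m3 Zc t p * sin t)
             + (2 * (m1 - m3)) * ((sin t * cos p)^2 * cos t ^ 2 * rr m1 m2 m3 Zc t p * sin t)))
        = (sin p ^ 2 + cos p ^ 2 - 1) * (sin t * rr m1 m2 m3 Zc t p * (cos t ^ 2 + 2 * m1 * sin t ^ 2 * cos t ^ 2 * cos p ^ 2)))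
      by ring.
    assert (Hs : sin p ^ 2 + cos p ^ 2 = 1) by (rewrite <- (sin2_cos2 p); unfold Rsqr; ring).
    rewrite Hs in HH. lra.
  - c2r.
  - c2r.
  - c2r.
  - der.
  - der.
  - intros p. unfold rr. rewrite sin_0. match goal with |- ?a = ?b => change (@eq R a b) end. ring.
  - intros p. unfold rr. rewrite sin_PI. match goal with |- ?a = ?b => change (@eq R a b) end. ring.
  - intros t. unfold rr. rewrite sin_2PI, cos_2PI, sin_0, cos_0. reflexivity.
Qed.

Lemma id_yz m1 m2 m3 Zc :
  DI (fun t p => cos t ^ 2 * rr m1 m2 m3 Zc t p * sin t)
  + (-1) * DI (fun t p => (sin t * sin p)^2 * rr m1 m2 m3 Zc t p * sin t)
  + (2 * (m2 - m3)) * DI (fun t p => (sin t * sin p)^2 * cos t ^ 2 * rr m1 m2 m3 Zc t p * sin t) = 0.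
Proof.
  rewrite <- !DI_scal by c2r. rewrite <- !DI_plus by c2r.
  rewrite <- (key (fun t p => sin t ^ 2 * sin p ^ 2 * cos t * rr m1 m2 m3 Zc t p)
     (fun t p => (2 * sin t * cos t ^ 2 * sin p ^ 2 - sin t ^ 3 * sin p ^ 2) * rr m1 m2 m3 Zc t p
        + sin t ^ 2 * sin p ^ 2 * cos t * rr m1 m2 m3 Zc t p *
          (2 * m1 * (sin t * cos p) * (cos t * cos p) + 2 * m2 * (sin t * sin p) * (cos t * sin p) - 2 * m3 * cos t * sin t))
     (fun t p => sin t * cos t ^ 2 * sin p * cos p * rr m1 m2 m3 Zc t p)
     (fun t p => sin t * cos t ^ 2 * ((cos p ^ 2 - sin p ^ 2) + sin p * cos p *
          (- 2 * m1 * sin t ^ 2 * cos p * sin p + 2 * m2 * sin t ^ 2 * sin p * cos p)) * rr m1 m2 m3 Zc t p)).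
  - apply DI_ext. intros t p.
    assert (HH : (2 * sin t * cos t ^ 2 * sin p ^ 2 - sin t ^ 3 * sin p ^ 2) * rr m1 m2 m3 Zc t p
        + sin t ^ 2 * sin p ^ 2 * cos t * rr m1 m2 m3 Zc t p *
          (2 * m1 * (sin t * cos p) * (cos t * cos p) + 2 * m2 * (sin t * sin p) * (cos t * sin p) - 2 * m3 * cos t * sin t)
        + sin t * cos t ^ 2 * ((cos p ^ 2 - sin p ^ 2) + sin p * cos p *
          (- 2 * m1 * sin t ^ 2 * cos p * sin p + 2 * m2 * sin t ^ 2 * sin p * cos p)) * rr m1 m2 m3 Zc t p
        - (cos t ^ 2 * rr m1 m2 m3 Zc t p * sin t + ((-1) * ((sin t * sin p)^2 * rr m1 m2 m3 Zc t p * sin t)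
             + (2 * (m2 - m3)) * ((sin t * sin p)^2 * cos t ^ 2 * rr m1 m2 m3 Zc t p * sin t)))
        = (sin p ^ 2 + cos p ^ 2 - 1) * (sin t * rr m1 m2 m3 Zc t p * (cos t ^ 2 + 2 * m2 * sin t ^ 2 * cos t ^ 2 * sin p ^ 2)))
      by ring.
    assert (Hs : sin p ^ 2 + cos p ^ 2 = 1) by (rewrite <- (sin2_cos2 p); unfold Rsqr; ring).
    rewrite Hs in HH. lra.
  - c2r.
  - c2r.
  - c2r.
  - der.
  - der.
  - intros p. unfold rr. rewrite sin_0. match goal with |- ?a = ?b => change (@eq R a b) end. ring.
  - intros p. unfold rr. rewrite sin_PI. match goal with |- ?a = ?b => change (@eq R a b) end. ring.
  - intros t. unfold rr. rewrite sin_2PI, cos_2PI, sin_0, cos_0. reflexivity.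
Qed.

Lemma sgn_le d M L : 0 < M -> L = 2 * d * M -> L <= 0 -> d <= 0.
Proof. intros HM HL HL0. destruct (Rle_or_lt d 0); auto. nra. Qed.
Lemma sgn_eq d M L : 0 < M -> L = 2 * d * M -> L = 0 -> d = 0.
Proof. intros HM HL HL0. subst L. destruct (Rmult_integral _ _ HL0) as [H|H]; lra. Qed.

Lemma Mpos m1 m2 m3 Zc (w : R -> R -> R) : 0 < Zc ->
  cont2d (fun t p => w t p * rr m1 m2 m3 Zc t p * sin t) ->
  (forall t p, 0 <= w t p) -> (forall t p, 0 < t < PI/2 -> 0 < p < PI/2 -> 0 < w t p) ->
  0 < DI (fun t p => w t p * rr m1 m2 m3 Zc t p * sin t).
Proof.
  intros HZ Hc Hw Hs. generalize PI_RGT_0; intro HPI.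
  assert (Hr : forall t p, 0 < rr m1 m2 m3 Zc t p).
  { intros; unfold rr. apply Rdiv_lt_0_compat; auto. apply exp_pos. }
  apply DI_pos; auto.
  - intros t p Ht. apply Rmult_le_pos. apply Rmult_le_pos; auto. left; auto.
    apply sin_ge_0; lra.
  - intros t p Ht Hp. apply Rmult_lt_0_compat. apply Rmult_lt_0_compat; auto.
    apply sin_gt_0; lra.
Qed.

Lemma trig_pos t : 0 < t < PI/2 -> 0 < sin t /\ 0 < cos t.
Proof. intros H. generalize PI_RGT_0; intro. split. apply sin_gt_0; lra. apply cos_gt_0; lra. Qed.

Theorem lemma2p1 (l1 l2 l3 m1 m2 m3 : R) :
  -(1/3) < l1 -> l1 <= l2 -> l2 <= l3 -> l3 < 2/3 ->
  l1 + l2 + l3 = 0 ->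
  BM_multipliers l1 l2 l3 m1 m2 m3 ->
  (m1 <= m2 /\ m2 <= m3) /\
  (l1 = l2 -> m1 = m2) /\ (l1 = l3 -> m1 = m3) /\ (l2 = l3 -> m2 = m3).
Proof.
  intros _ H12 H23 _ _ [_ [HX [HY HZm]]].
  set (Zc := BM_Z m1 m2 m3) in *.
  assert (HZ : 0 < Zc).
  { change (0 < DI (fun t p => exp (m1 * (sin t * cos p) ^ 2 + m2 * (sin t * sin p) ^ 2 + m3 * cos t ^ 2) * sin t)).
    generalize PI_RGT_0; intro HPI.
    apply DI_pos.
    - intros t p; c2.
    - intros t p Ht. apply Rmult_le_pos. left; apply exp_pos. apply sin_ge_0; lra.
    - intros t p Ht Hp. apply Rmult_lt_0_compat. apply exp_pos. apply sin_gt_0; lra. }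
  change (DI (fun t p => (sin t * cos p)^2 * rr m1 m2 m3 Zc t p * sin t) = l1 + 1/3) in HX.
  change (DI (fun t p => (sin t * sin p)^2 * rr m1 m2 m3 Zc t p * sin t) = l2 + 1/3) in HY.
  change (DI (fun t p => cos t ^ 2 * rr m1 m2 m3 Zc t p * sin t) = l3 + 1/3) in HZm.
  assert (Ixy := id_xy m1 m2 m3 Zc). assert (Ixz := id_xz m1 m2 m3 Zc). assert (Iyz := id_yz m1 m2 m3 Zc).
  rewrite HX, HY in Ixy. rewrite HX, HZm in Ixz. rewrite HY, HZm in Iyz.
  assert (Pxy : 0 < DI (fun t p => (sin t * cos p)^2 * (sin t * sin p)^2 * rr m1 m2 m3 Zc t p * sin t)).
  { apply (Mpos m1 m2 m3 Zc (fun t p => (sin t * cos p)^2 * (sin t * sin p)^2)); auto.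
    - c2r.
    - intros t p. apply Rmult_le_pos; apply pow2_ge_0.
    - intros t p Ht Hp. destruct (trig_pos t Ht). destruct (trig_pos p Hp).
      apply Rmult_lt_0_compat; apply pow_lt; apply Rmult_lt_0_compat; auto. }
  assert (Pxz : 0 < DI (fun t p => (sin t * cos p)^2 * cos t ^ 2 * rr m1 m2 m3 Zc t p * sin t)).
  { apply (Mpos m1 m2 m3 Zc (fun t p => (sin t * cos p)^2 * cos t ^ 2)); auto.
    - c2r.
    - intros t p. apply Rmult_le_pos; apply pow2_ge_0.
    - intros t p Ht Hp. destruct (trig_pos t Ht). destruct (trig_pos p Hp).
      apply Rmult_lt_0_compat; apply pow_lt; try apply Rmult_lt_0_compat; auto. }
  assert (Pyz : 0 < DI (fun t p => (sin t * sin p)^2 * cos t ^ 2 * rr m1 m2 m3 Zc t p * sin t)).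
  { apply (Mpos m1 m2 m3 Zc (fun t p => (sin t * sin p)^2 * cos t ^ 2)); auto.
    - c2r.
    - intros t p. apply Rmult_le_pos; apply pow2_ge_0.
    - intros t p Ht Hp. destruct (trig_pos t Ht). destruct (trig_pos p Hp).
      apply Rmult_lt_0_compat; apply pow_lt; try apply Rmult_lt_0_compat; auto. }
  set (Mxy := DI _) in Pxy, Ixy.
  set (Mxz := DI _) in Pxz, Ixz.
  set (Myz := DI _) in Pyz, Iyz.
  assert (E1 : l1 - l2 = 2 * (m1 - m2) * Mxy) by lra.
  assert (E2 : l2 - l3 = 2 * (m2 - m3) * Myz) by lra.
  assert (E3 : l1 - l3 = 2 * (m1 - m3) * Mxz) by lra.
  split; [split|split; [|split]]; intros.
  - assert (m1 - m2 <= 0) by (apply (sgn_le _ Mxy (l1 - l2)); auto; lra). lra.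
  - assert (m2 - m3 <= 0) by (apply (sgn_le _ Myz (l2 - l3)); auto; lra). lra.
  - assert (m1 - m2 = 0) by (apply (sgn_eq _ Mxy (l1 - l2)); auto; lra). lra.
  - assert (m1 - m3 = 0) by (apply (sgn_eq _ Mxz (l1 - l3)); auto; lra). lra.
  - assert (m2 - m3 = 0) by (apply (sgn_eq _ Myz (l2 - l3)); auto; lra). lra.
Qed.
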